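(* Let $\boldsymbol{S}\in\mathrm{Mat}(M,M,\mathbb{C})$ be invertible, $\boldsymbol{U}\in\mathrm{Mat}(m,M,\mathbb{C})$, $\boldsymbol{V}\in\mathrm{Mat}(M,m,\mathbb{C})$, let $\boldsymbol{K}\in\mathrm{Mat}(M,M,\mathbb{C})$ be invertible with $\boldsymbol{S}\boldsymbol{K}+\boldsymbol{K}\boldsymbol{S}=\boldsymbol{V}\boldsymbol{U}$, and let $p_0\in\mathrm{Mat}(m,m,\mathbb{C})$. Define the reflected data $$\boldsymbol{S}'=-\boldsymbol{S},\quad \boldsymbol{K}'=-\boldsymbol{K}^{-1},\quad \boldsymbol{V}'=\boldsymbol{K}^{-1}\boldsymbol{V},\quad \boldsymbol{U}'=\boldsymbol{U}\boldsymbol{K}^{-1},\quad p_0'=p_0-\boldsymbol{U}\boldsymbol{K}^{-1}\boldsymbol{V}.$$ Then $\boldsymbol{S}'\boldsymbol{K}'+\boldsymbol{K}'\boldsymbol{S}'=\boldsymbol{V}'\boldsymbol{U}'$, and the pair $(q,p)$ built from $(\boldsymbol{S},\boldsymbol{K},\boldsymbol{U},\boldsymbol{V},p_0)$ by the formulas $$q=\boldsymbol{U}\boldsymbol{\Xi}\,(\boldsymbol{I}_M+(\boldsymbol{K}\boldsymbol{\Xi})^2)^{-1}\boldsymbol{V},\qquad p=p_0-\boldsymbol{U}\boldsymbol{\Xi}\boldsymbol{K}\boldsymbol{\Xi}\,(\boldsymbol{I}_M+(\boldsymbol{K}\boldsymbol{\Xi})^2)^{-1}\boldsymbol{V},\qquad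 \boldsymbol{\Xi}=e^{-\boldsymbol{S}x-\boldsymbol{S}^{-1}y},$$ coincides with the pair $(q',p')$ built by the same formulas from $(\boldsymbol{S}',\boldsymbol{K}',\boldsymbol{U}',\boldsymbol{V}',p_0')$ (with $\boldsymbol{\Xi}'=e^{-\boldsymbol{S}'x-\boldsymbol{S}'^{-1}y}$), at all points where the relevant inverses exist.
   Context: $\boldsymbol{I}_M$ is the $M\times M$ identity matrix and $e^{(\cdot)}$ is the matrix exponential; $x,y$ are real variables. *)

(* Defs.v *)
(* complex numbers as pairs of Stdlib reals, matrices as
   functions nat -> nat -> C whose dimensions are tracked by the operations
   (products take the inner dimension) and by entrywise equality [meq]. *)
From Stdlib Require Import Reals Arith Factorial.
Open Scope R_scope.

Definition C : Type := (R * R)%type.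
Definition RtoC (r : R) : C := (r, 0).
Definition C0 : C := (0, 0).
Definition C1 : C := (1, 0).
Definition Cadd (a b : C) : C := (fst a + fst b, snd a + snd b).
Definition Copp (a : C) : C := (- fst a, - snd a).
Definition Cmul (a b : C) : C :=
  (fst a * fst b - snd a * snd b, fst a * snd b + snd a * fst b).

Fixpoint Csum (n : nat) (f : nat -> C) : C :=
  match n with
  | O => C0
  | Datatypes.S n' => Cadd (Csum n' f) (f n')
  end.

Definition Mat : Type := nat -> nat -> C.

Definition madd (A B : Mat) : Mat := fun i j => Cadd (A i j) (B i j).
Definition mopp (A : Mat) : Mat := fun i j => Copp (A i j).
Definition msub (A B : Mat) : Mat := madd A (mopp B).
Definition mscal (c : C) (A : Mat) : Mat := fun i j => Cmul c (A i j).
Definition mmul (n : nat) (A B : Mat) : Mat :=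
  fun i j => Csum n (fun k => Cmul (A i k) (B k j)).
Definition mId : Mat := fun i j => if Nat.eqb i j then C1 else C0.

Definition meq (m n : nat) (A B : Mat) : Prop :=
  forall i j, (i < m)%nat -> (j < n)%nat -> A i j = B i j.

Definition is_inv (n : nat) (A B : Mat) : Prop :=
  meq n n (mmul n A B) mId /\ meq n n (mmul n B A) mId.

Fixpoint mpow (n : nat) (A : Mat) (k : nat) : Mat :=
  match k with
  | O => mId
  | Datatypes.S k' => mmul n (mpow n A k') A
  end.

Definition exp_partial (n : nat) (A : Mat) (N : nat) : Mat :=
  fun i j => Csum (Datatypes.S N)
               (fun k => mscal (RtoC (/ INR (fact k))) (mpow n A k) i j).

Definition is_mexp (n : nat) (A E : Mat) : Prop :=
  forall i j, (i < n)%nat -> (j < n)%nat ->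
    Un_cv (fun N => fst (exp_partial n A N i j)) (fst (E i j)) /\
    Un_cv (fun N => snd (exp_partial n A N i j)) (snd (E i j)).

Definition is_Xi (M : nat) (Sm Sinv : Mat) (x y : R) (Xi : Mat) : Prop :=
  is_mexp M (msub (mopp (mscal (RtoC x) Sm)) (mscal (RtoC y) Sinv)) Xi.

Definition is_W (M : nat) (K Xi W : Mat) : Prop :=
  is_inv M (madd mId (mmul M (mmul M K Xi) (mmul M K Xi))) W.

Definition q_of (M : nat) (U V Xi W : Mat) : Mat :=
  mmul M U (mmul M Xi (mmul M W V)).
Definition p_of (M : nat) (p0 K U V Xi W : Mat) : Mat :=
  msub p0 (mmul M U (mmul M Xi (mmul M K (mmul M Xi (mmul M W V))))).

(* Main.v *)
From Pilot Require Import Defs.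
From Stdlib Require Import Reals Lra Lia Factorial Setoid Morphisms FunctionalExtensionality.
Open Scope R_scope.

Lemma ind_sum (g : nat -> R) m d :
  sum_f_R0 (fun l => if (l <=? m)%nat then g l else 0) (m + d) = sum_f_R0 g m.
Proof.
  induction d as [|d IH].
  - rewrite Nat.add_0_r. apply sum_eq. intros i Hi.
    destruct (Nat.leb_spec i m); [reflexivity|lia].
  - rewrite Nat.add_succ_r. change (sum_f_R0 ?F (S ?n)) with (sum_f_R0 F n + F (S n)). rewrite IH. cbv beta.
    destruct (Nat.leb_spec (S (m + d)) m); [lia|lra].
Qed.

Lemma tri_eq (f : nat -> nat -> R) N :
  sum_f_R0 (fun n => sum_f_R0 (fun k => f k (n - k)%nat) n) N =
  sum_f_R0 (fun k => sum_f_R0 (fun l => f k l) (N - k)) N.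
Proof.
  induction N as [|N IH].
  - reflexivity.
  - rewrite (tech5 _ N). rewrite IH.
    rewrite (tech5 (fun k => sum_f_R0 (fun l => f k l) (S N - k)) N). rewrite Nat.sub_diag.
    replace (sum_f_R0 (fun k => sum_f_R0 (fun l => f k l) (S N - k)) N)
      with (sum_f_R0 (fun k => sum_f_R0 (fun l => f k l) (N - k) + f k (S N - k)%nat) N).
    + rewrite sum_plus. rewrite (tech5 (fun k => f k (S N - k)%nat)), Nat.sub_diag. simpl (sum_f_R0 _ 0). lra.
    + apply sum_eq. intros i Hi.
      replace (S N - i)%nat with (S (N - i)) by lia. rewrite tech5. reflexivity.
Qed.

Lemma sq_split (f : nat -> nat -> R) N :
  sum_f_R0 (fun k => sum_f_R0 (fun l => f k l) N) N =
  sum_f_R0 (fun k => sum_f_R0 (fun l => if (k + l <=? N)%nat then f k l else 0) N) N +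
  sum_f_R0 (fun k => sum_f_R0 (fun l => if (k + l <=? N)%nat then 0 else f k l) N) N.
Proof.
  rewrite <- sum_plus. apply sum_eq. intros k _. rewrite <- sum_plus.
  apply sum_eq. intros l _. destruct (k + l <=? N)%nat; lra.
Qed.

Lemma ind_tri (f : nat -> nat -> R) N :
  sum_f_R0 (fun k => sum_f_R0 (fun l => if (k + l <=? N)%nat then f k l else 0) N) N =
  sum_f_R0 (fun k => sum_f_R0 (fun l => f k l) (N - k)) N.
Proof.
  apply sum_eq. intros k Hk.
  transitivity (sum_f_R0 (fun l => if (l <=? N - k)%nat then f k l else 0) ((N - k) + k)).
  2:{ apply ind_sum. }
  replace ((N - k) + k)%nat with N by lia.
  apply sum_eq. intros l _.
  destruct (Nat.leb_spec (k + l) N); destruct (Nat.leb_spec l (N - k)); try lia; reflexivity.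
Qed.

Lemma binom_tri x y (h : nat -> R) N :
  sum_f_R0 (fun n => sum_f_R0 (fun k => x ^ k / INR (fact k) * (y ^ (n - k) / INR (fact (n - k))) * h n) n) N
  = sum_f_R0 (fun n => h n * (x + y) ^ n / INR (fact n)) N.
Proof.
  apply sum_eq. intros n _. rewrite binomial.
  unfold Rdiv. rewrite Rmult_assoc. rewrite (Rmult_comm _ (/ _)). rewrite <- Rmult_assoc.
  rewrite scal_sum. apply sum_eq. intros k Hk. unfold C.
  assert (H1 := INR_fact_neq_0 k). assert (H2 := INR_fact_neq_0 (n - k)).
  assert (H3 := INR_fact_neq_0 n).
  field. auto.
Qed.

Lemma exp_cv x : Un_cv (fun N => sum_f_R0 (fun i => / INR (fact i) * x ^ i) N) (exp x).
Proof. unfold exp. destruct (exist_exp x) as [l Hl]. simpl. exact Hl. Qed.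

Lemma squeeze (u v : nat -> R) l :
  (forall N, Rabs (u N - l) <= v N) -> Un_cv v 0 -> Un_cv u l.
Proof.
  intros H Hv eps He. destruct (Hv eps He) as [N HN]. exists N. intros n Hn.
  specialize (HN n Hn). unfold Rdist in *. rewrite Rminus_0_r in HN.
  specialize (H n). pose proof (Rle_abs (v n)). lra.
Qed.

Lemma alt_sum (h : nat -> R) N :
  sum_f_R0 (fun n => h n * (1 + -1) ^ n / INR (fact n)) N = h 0%nat.
Proof.
  induction N as [|N IH].
  - simpl. field.
  - simpl sum_f_R0. rewrite IH. replace (1 + -1) with 0 by ring. simpl. lra.
Qed.

Lemma mainL (h : nat -> R) c : 0 <= c -> (forall n, Rabs (h n) <= c ^ n) ->
  Un_cv (fun N => sum_f_R0 (fun k => sum_f_R0 (fun l =>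
      / INR (fact k) * ((-1) ^ l * / INR (fact l)) * h (k + l)%nat) N) N) (h 0%nat).
Proof.
  intros Hc Hh.
  set (f := fun k l => / INR (fact k) * ((-1) ^ l * / INR (fact l)) * h (k + l)%nat).
  set (g := fun k l : nat => c ^ k / INR (fact k) * (c ^ l / INR (fact l))).
  set (S := fun x N => sum_f_R0 (fun i => / INR (fact i) * x ^ i) N).
  apply squeeze with (v := fun N => S c N * S c N - S (c + c) N).
  - intro N. change (fun k => sum_f_R0 (fun l => / INR (fact k) * ((-1) ^ l * / INR (fact l)) * h (k + l)%nat) N)
      with (fun k => sum_f_R0 (fun l => f k l) N).
    rewrite sq_split, ind_tri, <- tri_eq.
    assert (Tf : sum_f_R0 (fun n => sum_f_R0 (fun k => f k (n - k)%nat) n) N = h 0%nat).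
    { rewrite <- (alt_sum h N). rewrite <- binom_tri. apply sum_eq. intros n _.
      apply sum_eq. intros k Hk. unfold f. replace (k + (n - k))%nat with n by lia.
      rewrite pow1. unfold Rdiv. ring. }
    rewrite Tf. replace (h 0%nat + _ - h 0%nat) with
      (sum_f_R0 (fun k => sum_f_R0 (fun l => if (k + l <=? N)%nat then 0 else f k l) N) N) by ring.
    assert (Eg : S c N * S c N - S (c + c) N =
       sum_f_R0 (fun k => sum_f_R0 (fun l => if (k + l <=? N)%nat then 0 else g k l) N) N).
    { assert (Sq : S c N * S c N = sum_f_R0 (fun k => sum_f_R0 (fun l => g k l) N) N).
      { unfold S. rewrite scal_sum. apply sum_eq. intros k _.
        rewrite scal_sum. apply sum_eq. intros l _. unfold g. unfold Rdiv. ring. }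
      assert (Tg : S (c + c) N = sum_f_R0 (fun n => sum_f_R0 (fun k => g k (n - k)%nat) n) N).
      { unfold S. transitivity (sum_f_R0 (fun n => (fun _ => 1) n * (c + c) ^ n / INR (fact n)) N).
        - apply sum_eq. intros n _. unfold Rdiv. ring.
        - rewrite <- binom_tri. apply sum_eq. intros n _. apply sum_eq. intros k _.
          unfold g. ring. }
      rewrite Sq, Tg, sq_split, ind_tri, <- tri_eq. ring. }
    rewrite Eg.
    eapply Rle_trans. apply sum_f_R0_triangle. apply sum_Rle. intros k _.
    eapply Rle_trans. apply sum_f_R0_triangle. apply sum_Rle. intros l _.
    destruct (k + l <=? N)%nat.
    + rewrite Rabs_R0. lra.
    + unfold f, g. rewrite !Rabs_mult. rewrite pow_1_abs.
      assert (H1 := INR_fact_lt_0 k). assert (H2 := INR_fact_lt_0 l).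
      rewrite (Rabs_right (/ INR (fact k))) by (left; apply Rinv_0_lt_compat; lra).
      rewrite (Rabs_right (/ INR (fact l))) by (left; apply Rinv_0_lt_compat; lra).
      replace (c ^ k / INR (fact k) * (c ^ l / INR (fact l))) with
        (/ INR (fact k) * (1 * / INR (fact l)) * c ^ (k + l)).
      2:{ rewrite pow_add. unfold Rdiv. ring. }
      apply Rmult_le_compat_l.
      * assert (0 < / INR (fact k)) by (apply Rinv_0_lt_compat; lra).
        assert (0 < / INR (fact l)) by (apply Rinv_0_lt_compat; lra). nra.
      * apply Hh.
  - replace 0 with (exp c * exp c - exp (c + c)) by (rewrite exp_plus; ring).
    apply CV_minus. apply CV_mult; apply exp_cv. apply exp_cv.
Qed.

Notation CC := Pilot.Defs.C.
Definition Csub (a b : CC) : CC := Cadd a (Copp b).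

Lemma Cring : ring_theory Pilot.Defs.C0 Pilot.Defs.C1 Cadd Cmul Csub Copp (@eq CC).
Proof.
  constructor; intros; repeat match goal with a : CC |- _ => destruct a end;
  unfold Csub, Cadd, Cmul, Copp, Pilot.Defs.C0, Pilot.Defs.C1; simpl; f_equal; ring.
Qed.
Add Ring Cring : Cring.

Lemma Csum_ext n f g : (forall k, (k < n)%nat -> f k = g k) -> Csum n f = Csum n g.
Proof. induction n; intros H; simpl; [reflexivity|]. rewrite IHn by (intros; apply H; lia). rewrite H by lia. reflexivity. Qed.
Lemma Csum_add n f g : Csum n (fun k => Cadd (f k) (g k)) = Cadd (Csum n f) (Csum n g).
Proof. induction n; simpl. unfold Pilot.Defs.C0, Cadd; simpl; f_equal; ring. rewrite IHn. ring. Qed.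
Lemma Csum_mul_l n z f : Csum n (fun k => Cmul z (f k)) = Cmul z (Csum n f).
Proof. induction n; simpl. unfold Pilot.Defs.C0, Cmul; simpl; f_equal; ring. rewrite IHn. ring. Qed.
Lemma Csum_mul_r n z f : Csum n (fun k => Cmul (f k) z) = Cmul (Csum n f) z.
Proof. induction n; simpl. unfold Pilot.Defs.C0, Cmul; simpl; f_equal; ring. rewrite IHn. ring. Qed.
Lemma Csum_opp n f : Csum n (fun k => Copp (f k)) = Copp (Csum n f).
Proof. induction n; simpl. unfold Pilot.Defs.C0, Copp; simpl; f_equal; ring. rewrite IHn. ring. Qed.
Lemma Csum_swap n m f : Csum n (fun a => Csum m (fun b => f a b)) = Csum m (fun b => Csum n (fun a => f a b)).
Proof.
  revert m; induction n; intros m; simpl.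
  - induction m; simpl; [reflexivity|]. rewrite <- IHm. unfold Pilot.Defs.C0, Cadd; simpl; f_equal; ring.
  - rewrite IHn. rewrite <- Csum_add. reflexivity.
Qed.
Lemma Csum_zero n : Csum n (fun _ => Pilot.Defs.C0) = Pilot.Defs.C0.
Proof. induction n; simpl; [reflexivity|]. rewrite IHn. unfold Pilot.Defs.C0, Cadd; simpl; f_equal; ring. Qed.
Lemma Csum_delta_l n i g : (i < n)%nat -> Csum n (fun k => Cmul (mId i k) (g k)) = g i.
Proof.
  induction n; intros H; [lia|]. simpl. destruct (Nat.eq_dec i n).
  - subst. rewrite (Csum_ext _ _ (fun _ => Pilot.Defs.C0)).
    + rewrite Csum_zero. unfold mId. rewrite Nat.eqb_refl. ring.
    + intros k Hk. unfold mId. destruct (Nat.eqb_spec n k); [lia|]. ring.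
  - rewrite IHn by lia. unfold mId. destruct (Nat.eqb_spec i n); [lia|]. ring.
Qed.
Lemma Csum_delta_r n j g : (j < n)%nat -> Csum n (fun k => Cmul (g k) (mId k j)) = g j.
Proof.
  intros H. rewrite <- (Csum_delta_l n j g H). apply Csum_ext. intros k _.
  unfold mId. destruct (Nat.eqb_spec j k); destruct (Nat.eqb_spec k j); try lia; subst; ring.
Qed.

Lemma mmul_assoc n p A B D : mmul n (mmul p A B) D = mmul p A (mmul n B D).
Proof.
  extensionality i; extensionality j. unfold mmul.
  rewrite (Csum_ext n _ (fun k => Csum p (fun l => Cmul (A i l) (Cmul (B l k) (D k j))))).
  - rewrite Csum_swap. apply Csum_ext. intros l _. rewrite <- Csum_mul_l. reflexivity.
  - intros k _. rewrite <- Csum_mul_r. apply Csum_ext. intros l _. ring.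
Qed.
Lemma mmul_addr n A B D : mmul n A (madd B D) = madd (mmul n A B) (mmul n A D).
Proof. extensionality i; extensionality j. unfold mmul, madd. rewrite <- Csum_add. apply Csum_ext. intros; ring. Qed.
Lemma mmul_addl n A B D : mmul n (madd A B) D = madd (mmul n A D) (mmul n B D).
Proof. extensionality i; extensionality j. unfold mmul, madd. rewrite <- Csum_add. apply Csum_ext. intros; ring. Qed.
Lemma mmul_oppr n A B : mmul n A (mopp B) = mopp (mmul n A B).
Proof. extensionality i; extensionality j. unfold mmul, mopp. rewrite <- Csum_opp. apply Csum_ext. intros; ring. Qed.
Lemma mmul_oppl n A B : mmul n (mopp A) B = mopp (mmul n A B).
Proof. extensionality i; extensionality j. unfold mmul, mopp. rewrite <- Csum_opp. apply Csum_ext. intros; ring. Qed.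
Lemma mopp_opp A : mopp (mopp A) = A.
Proof. extensionality i; extensionality j. unfold mopp. ring. Qed.

Global Instance meq_equiv a b : Equivalence (meq a b).
Proof. split.
  - intros A i j _ _. reflexivity.
  - intros A B H i j Hi Hj. symmetry. auto.
  - intros A B D H1 H2 i j Hi Hj. rewrite H1 by auto. auto. Qed.
Global Instance mmul_proper a n b : Proper (meq a n ==> meq n b ==> meq a b) (mmul n).
Proof. intros A A' HA B B' HB i j Hi Hj. unfold mmul. apply Csum_ext. intros k Hk. rewrite HA, HB by auto. reflexivity. Qed.
Global Instance madd_proper a b : Proper (meq a b ==> meq a b ==> meq a b) madd.
Proof. intros A A' HA B B' HB i j Hi Hj. unfold madd. rewrite HA, HB by auto. reflexivity. Qed.
Global Instance mopp_proper a b : Proper (meq a b ==> meq a b) mopp.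
Proof. intros A A' HA i j Hi Hj. unfold mopp. rewrite HA by auto. reflexivity. Qed.
Global Instance msub_proper a b : Proper (meq a b ==> meq a b ==> meq a b) msub.
Proof. intros A A' HA B B' HB i j Hi Hj. unfold msub, madd, mopp. rewrite HA, HB by auto. reflexivity. Qed.
Global Instance mscal_proper a b c : Proper (meq a b ==> meq a b) (mscal c).
Proof. intros A A' HA i j Hi Hj. unfold mscal. rewrite HA by auto. reflexivity. Qed.

Lemma mmul_idl n b A : meq n b (mmul n mId A) A.
Proof. intros i j Hi Hj. apply (Csum_delta_l n i (fun k => A k j)). auto. Qed.
Lemma mmul_idr a n A : meq a n (mmul n A mId) A.
Proof. intros i j Hi Hj. unfold mmul. apply (Csum_delta_r n j (fun k => A i k)). auto. Qed.
Lemma cancel n b X Y Z : meq n n (mmul n X Y) mId -> meq n b (mmul n X (mmul n Y Z)) Z.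
Proof. intros H. rewrite <- mmul_assoc, H. apply mmul_idl. Qed.

Ltac Ceq := repeat match goal with a : CC |- _ => destruct a end;
  unfold Cmul, Cadd, Copp, RtoC, Pilot.Defs.C0, Pilot.Defs.C1; simpl; f_equal; ring.

Lemma mpow_opp n A l : mpow n (mopp A) l = mscal (RtoC ((-1) ^ l)) (mpow n A l).
Proof.
  induction l as [|l IH]; extensionality i; extensionality j.
  - unfold mscal. simpl. destruct (mId i j). Ceq.
  - simpl. rewrite IH. unfold mmul, mscal, mopp.
    rewrite <- Csum_mul_l. apply Csum_ext. intros k _. Ceq.
Qed.

Lemma mpow_S n A l : mpow n A (S l) = mmul n (mpow n A l) A.
Proof. reflexivity. Qed.

Lemma mpow_add n A k l i j : (j < n)%nat ->
  mmul n (mpow n A k) (mpow n A l) i j = mpow n A (k + l) i j.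
Proof.
  revert i j; induction l as [|l IH]; intros i j Hj.
  - rewrite Nat.add_0_r. apply (mmul_idr (S i) n (mpow n A k)); lia.
  - rewrite (mpow_S n A l). rewrite <- mmul_assoc. rewrite Nat.add_succ_r, mpow_S.
    unfold mmul at 1 3. apply Csum_ext. intros p Hp. rewrite IH by auto. reflexivity.
Qed.

Definition nrm (z : CC) : R := Rabs (fst z) + Rabs (snd z).

Lemma nrm_mul z w : nrm (Cmul z w) <= nrm z * nrm w.
Proof.
  destruct z as [a b], w as [c d]. unfold nrm, Cmul; simpl.
  assert (H1 : Rabs (a * c - b * d) <= Rabs a * Rabs c + Rabs b * Rabs d).
  { unfold Rminus. eapply Rle_trans. apply Rabs_triang. rewrite Rabs_Ropp, !Rabs_mult. lra. }
  assert (H2 : Rabs (a * d + b * c) <= Rabs a * Rabs d + Rabs b * Rabs c).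
  { eapply Rle_trans. apply Rabs_triang. rewrite !Rabs_mult. lra. }
  nra.
Qed.
Lemma nrm_add z w : nrm (Cadd z w) <= nrm z + nrm w.
Proof.
  destruct z as [a b], w as [c d]. unfold nrm, Cadd; simpl.
  pose proof (Rabs_triang a c). pose proof (Rabs_triang b d). lra.
Qed.
Lemma nrm_pos z : 0 <= nrm z.
Proof. unfold nrm. pose proof (Rabs_pos (fst z)). pose proof (Rabs_pos (snd z)). lra. Qed.
Lemma nrm_Csum n f c : (forall k, (k < n)%nat -> nrm (f k) <= c) -> nrm (Csum n f) <= INR n * c.
Proof.
  induction n; intros H.
  - unfold nrm, Pilot.Defs.C0; simpl. rewrite Rabs_R0. lra.
  - change (Csum (S n) f) with (Cadd (Csum n f) (f n)). eapply Rle_trans. apply nrm_add. rewrite S_INR.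
    assert (nrm (Csum n f) <= INR n * c) by (apply IHn; intros; apply H; lia).
    assert (nrm (f n) <= c) by (apply H; lia). lra.
Qed.

Lemma term_le_sum (f : nat -> R) N i : (forall k, 0 <= f k) -> (i <= N)%nat -> f i <= sum_f_R0 f N.
Proof.
  intros Hf; induction N; intros Hi.
  - replace i with 0%nat by lia. simpl. lra.
  - rewrite tech5. destruct (Nat.eq_dec i (S N)).
    + subst. pose proof (cond_pos_sum f N Hf). lra.
    + pose proof (Hf (S N)). assert (f i <= sum_f_R0 f N) by (apply IHN; lia). lra.
Qed.

Lemma mat_bound n A : exists b, 0 <= b /\ forall i j, (i < n)%nat -> (j < n)%nat -> nrm (A i j) <= b.
Proof.
  exists (sum_f_R0 (fun i => sum_f_R0 (fun j => nrm (A i j)) n) n). split.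
  - apply cond_pos_sum. intro i. apply cond_pos_sum. intro j. apply nrm_pos.
  - intros i j Hi Hj. eapply Rle_trans.
    2:{ apply (term_le_sum (fun i => sum_f_R0 (fun j => nrm (A i j)) n)).
        intro k. apply cond_pos_sum. intro. apply nrm_pos. instantiate (1 := i). lia. }
    apply (term_le_sum (fun j => nrm (A i j))). intro; apply nrm_pos. lia.
Qed.

Lemma mpow_bound n A b : 0 <= b -> (forall i j, (i < n)%nat -> (j < n)%nat -> nrm (A i j) <= b) ->
  forall k i j, (j < n)%nat -> nrm (mpow n A k i j) <= (INR n * b) ^ k.
Proof.
  intros Hb HA k; induction k as [|k IH]; intros i j Hj.
  - simpl. unfold mId. destruct (i =? j)%nat; unfold nrm, Pilot.Defs.C1, Pilot.Defs.C0; simpl;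
      rewrite ?Rabs_R0, ?Rabs_R1; lra.
  - simpl mpow. unfold mmul. simpl pow.
    replace (INR n * b * (INR n * b) ^ k) with (INR n * ((INR n * b) ^ k * b)) by ring.
    apply nrm_Csum. intros l Hl. eapply Rle_trans. apply nrm_mul.
    apply Rmult_le_compat; try apply nrm_pos. apply IH; auto. apply HA; auto.
Qed.

Lemma fst_Csum N f : fst (Csum (S N) f) = sum_f_R0 (fun k => fst (f k)) N.
Proof.
  induction N.
  - simpl. ring.
  - change (Csum (S (S N)) f) with (Cadd (Csum (S N) f) (f (S N))).
    rewrite tech5, <- IHN. reflexivity.
Qed.
Lemma snd_Csum N f : snd (Csum (S N) f) = sum_f_R0 (fun k => snd (f k)) N.
Proof.
  induction N.
  - simpl. ring.
  - change (Csum (S (S N)) f) with (Cadd (Csum (S N) f) (f (S N))).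
    rewrite tech5, <- IHN. reflexivity.
Qed.

Lemma Csum_prod a b f g :
  Cmul (Csum a f) (Csum b g) = Csum a (fun k => Csum b (fun l => Cmul (f k) (g l))).
Proof.
  rewrite <- Csum_mul_r. apply Csum_ext. intros k _. rewrite <- Csum_mul_l. reflexivity.
Qed.

Lemma entry_form n A N i j : (j < n)%nat ->
  mmul n (exp_partial n A N) (exp_partial n (mopp A) N) i j =
  Csum (S N) (fun k => Csum (S N) (fun l =>
     Cmul (RtoC (/ INR (fact k) * ((-1) ^ l * / INR (fact l)))) (mpow n A (k + l) i j))).
Proof.
  intros Hj. unfold mmul at 1, exp_partial.
  rewrite (Csum_ext n _ (fun p => Csum (S N) (fun k => Csum (S N) (fun l =>
     Cmul (RtoC (/ INR (fact k) * ((-1) ^ l * / INR (fact l))))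
          (Cmul (mpow n A k i p) (mpow n A l p j)))))).
  - rewrite Csum_swap. apply Csum_ext. intros k _. rewrite Csum_swap. apply Csum_ext. intros l _.
    rewrite Csum_mul_l. rewrite <- (mpow_add n A k l i j Hj). reflexivity.
  - intros p _. rewrite Csum_prod. apply Csum_ext. intros k _. apply Csum_ext. intros l _.
    rewrite mpow_opp. unfold mscal. Ceq.
Qed.

Lemma cv_const (c : R) : Un_cv (fun _ => c) c.
Proof. intros eps He. exists 0%nat. intros. unfold Rdist. rewrite Rminus_diag, Rabs_R0. lra. Qed.

Definition Ccv (F : nat -> CC) (L : CC) :=
  Un_cv (fun N => fst (F N)) (fst L) /\ Un_cv (fun N => snd (F N)) (snd L).

Lemma Ccv_mul F G a b : Ccv F a -> Ccv G b -> Ccv (fun N => Cmul (F N) (G N)) (Cmul a b).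
Proof.
  intros [H1 H2] [H3 H4]. unfold Cmul. split; simpl.
  - apply CV_minus; apply CV_mult; auto.
  - apply CV_plus; apply CV_mult; auto.
Qed.
Lemma Ccv_Csum n (F : nat -> nat -> CC) (L : nat -> CC) :
  (forall k, (k < n)%nat -> Ccv (fun N => F N k) (L k)) ->
  Ccv (fun N => Csum n (F N)) (Csum n L).
Proof.
  induction n; intros H.
  - split; simpl; apply cv_const.
  - assert (IH : Ccv (fun N => Csum n (F N)) (Csum n L)) by (apply IHn; intros; apply H; lia).
    destruct IH as [I1 I2]. destruct (H n ltac:(lia)) as [J1 J2].
    split; simpl; apply CV_plus; auto.
Qed.

Lemma mexp_inv n A E E' : is_mexp n A E -> is_mexp n (mopp A) E' -> meq n n (mmul n E E') mId.
Proof.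
  intros HE HE' i j Hi Hj.
  assert (Hcv : Ccv (fun N => mmul n (exp_partial n A N) (exp_partial n (mopp A) N) i j)
                    (mmul n E E' i j)).
  { unfold mmul at 2. unfold mmul. apply Ccv_Csum. intros k Hk. apply Ccv_mul.
    - destruct (HE i k Hi Hk). split; auto.
    - destruct (HE' k j Hk Hj). split; auto. }
  destruct (mat_bound n A) as [b [Hb HA]].
  pose proof (mpow_bound n A b Hb HA) as Hpow.
  assert (Hc : 0 <= INR n * b) by (apply Rmult_le_pos; [apply pos_INR|auto]).
  destruct Hcv as [C1 C2].
  assert (F1 : fst (mmul n E E' i j) = fst (mId i j)).
  { eapply UL_sequence. exact C1.
    eapply Un_cv_ext. 2:{ apply (mainL (fun m => fst (mpow n A m i j)) (INR n * b) Hc).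
      intro m. eapply Rle_trans. 2: apply (Hpow m i j Hj). unfold nrm.
      pose proof (Rabs_pos (snd (mpow n A m i j))). lra. }
    intro N. simpl. rewrite entry_form by auto. rewrite fst_Csum. apply sum_eq. intros k _.
    rewrite fst_Csum. apply sum_eq. intros l _. unfold Cmul, RtoC; simpl. ring. }
  assert (F2 : snd (mmul n E E' i j) = snd (mId i j)).
  { eapply UL_sequence. exact C2.
    eapply Un_cv_ext. 2:{ apply (mainL (fun m => snd (mpow n A m i j)) (INR n * b) Hc).
      intro m. eapply Rle_trans. 2: apply (Hpow m i j Hj). unfold nrm.
      pose proof (Rabs_pos (fst (mpow n A m i j))). lra. }
    intro N. simpl. rewrite entry_form by auto. rewrite snd_Csum. apply sum_eq. intros k _.
    rewrite snd_Csum. apply sum_eq. intros l _. unfold Cmul, RtoC; simpl. ring. }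
  rewrite (surjective_pairing (mmul n E E' i j)), F1, F2. symmetry. apply surjective_pairing.
Qed.

Lemma madd_comm A B : madd A B = madd B A.
Proof. extensionality i; extensionality j. unfold madd. ring. Qed.

Lemma inv_neg n S Si Si' : is_inv n S Si -> is_inv n (mopp S) Si' -> meq n n Si' (mopp Si).
Proof.
  intros HS HS'.
  transitivity (mmul n Si' (mmul n (mopp S) (mopp Si))).
  - rewrite (mmul_oppl n S), (mmul_oppr n S), mopp_opp, (proj1 HS). symmetry; apply mmul_idr.
  - rewrite <- mmul_assoc, (proj2 HS'). apply mmul_idl.
Qed.

Lemma canc_end n X Y : meq n n (mmul n X Y) mId -> forall a Z, meq a n (mmul n Z (mmul n X Y)) Z.
Proof. intros H a Z. rewrite H. apply mmul_idr. Qed.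

Lemma alg_q n K Ki X Y W W' :
  is_inv n K Ki -> is_inv n X Y ->
  meq n n (mmul n W (madd mId (mmul n (mmul n K X) (mmul n K X)))) mId ->
  meq n n (mmul n (madd mId (mmul n (mmul n Ki Y) (mmul n Ki Y))) W') mId ->
  meq n n (mmul n X W) (mmul n Ki (mmul n Y (mmul n W' Ki))).
Proof.
  intros [HK1 HK2] [HX1 HX2] HW HW'.
  set (D := madd Y (mmul n K (mmul n X K))).
  set (A := madd mId (mmul n (mmul n K X) (mmul n K X))) in *.
  set (B := madd mId (mmul n (mmul n Ki Y) (mmul n Ki Y))) in *.
  set (R := mmul n Ki (mmul n Y (mmul n W' Ki))).
  assert (D1 : meq n n D (mmul n A Y)).
  { unfold A. rewrite mmul_addl, !mmul_assoc. rewrite (canc_end n X Y HX1).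
    rewrite mmul_idl. reflexivity. }
  assert (D2 : meq n n D (mmul n K (mmul n B (mmul n X K)))).
  { unfold B. rewrite mmul_addl, mmul_addr, !mmul_assoc.
    rewrite (cancel n n K Ki _ HK1). rewrite (cancel n n Y X _ HX2).
    rewrite (canc_end n Ki K HK2). rewrite mmul_idl. unfold D. rewrite madd_comm. reflexivity. }
  assert (H1 : meq n n (mmul n (mmul n X W) D) mId).
  { rewrite D1. rewrite !mmul_assoc. rewrite <- (mmul_assoc n n W A Y). rewrite HW.
    rewrite mmul_idl. exact HX1. }
  assert (H2 : meq n n (mmul n D R) mId).
  { rewrite D2. unfold R. rewrite !mmul_assoc.
    rewrite (cancel n n K Ki _ HK1). rewrite (cancel n n X Y _ HX1).
    rewrite <- (mmul_assoc n n B W' Ki). rewrite HW'. rewrite mmul_idl. exact HK1. }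
  transitivity (mmul n (mmul n X W) (mmul n D R)).
  - rewrite H2. symmetry. apply mmul_idr.
  - rewrite <- mmul_assoc. rewrite H1. apply mmul_idl.
Qed.

Lemma alg_p n K Ki X Y W W' :
  is_inv n K Ki -> is_inv n X Y ->
  meq n n (mmul n W (madd mId (mmul n (mmul n K X) (mmul n K X)))) mId ->
  meq n n (mmul n (madd mId (mmul n (mmul n Ki Y) (mmul n Ki Y))) W') mId ->
  meq n n (mmul n X (mmul n K (mmul n X W))) (mmul n W' Ki).
Proof.
  intros [HK1 HK2] [HX1 HX2] HW HW'.
  set (E := madd K (mmul n Y (mmul n Ki Y))).
  set (A := madd mId (mmul n (mmul n K X) (mmul n K X))) in *.
  set (B := madd mId (mmul n (mmul n Ki Y) (mmul n Ki Y))) in *.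
  assert (D1 : meq n n E (mmul n A (mmul n Y (mmul n Ki Y)))).
  { unfold A. rewrite mmul_addl, !mmul_assoc. rewrite (cancel n n X Y _ HX1).
    rewrite (cancel n n K Ki _ HK1). rewrite (canc_end n X Y HX1).
    rewrite mmul_idl. unfold E. rewrite madd_comm. reflexivity. }
  assert (D2 : meq n n E (mmul n K B)).
  { unfold B. rewrite mmul_addr, !mmul_assoc.
    rewrite (cancel n n K Ki _ HK1). rewrite mmul_idr. reflexivity. }
  assert (H1 : meq n n (mmul n (mmul n X (mmul n K (mmul n X W))) E) mId).
  { rewrite D1. rewrite !mmul_assoc. rewrite <- (mmul_assoc n n W A). rewrite HW.
    rewrite mmul_idl. rewrite (cancel n n X Y _ HX1). rewrite (cancel n n K Ki _ HK1). exact HX1. }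
  assert (H2 : meq n n (mmul n E (mmul n W' Ki)) mId).
  { rewrite D2. rewrite !mmul_assoc.
    rewrite <- (mmul_assoc n n B W' Ki). rewrite HW'. rewrite mmul_idl. exact HK1. }
  transitivity (mmul n (mmul n X (mmul n K (mmul n X W))) (mmul n E (mmul n W' Ki))).
  - rewrite H2. symmetry. apply mmul_idr.
  - rewrite <- (mmul_assoc n n _ E). rewrite H1. apply mmul_idl.
Qed.

Lemma mpow_meq n A A' k : meq n n A A' -> meq n n (mpow n A k) (mpow n A' k).
Proof. intros H. induction k; simpl. reflexivity. rewrite IHk, H. reflexivity. Qed.

Lemma mexp_meq n A A' E : is_mexp n A E -> meq n n A A' -> is_mexp n A' E.
Proof.
  intros HE H i j Hi Hj.
  assert (Eq : forall N, exp_partial n A' N i j = exp_partial n A N i j).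
  { intro N. unfold exp_partial. apply Csum_ext. intros k _. unfold mscal.
    rewrite (mpow_meq n A A' k H i j Hi Hj). reflexivity. }
  destruct (HE i j Hi Hj) as [H1 H2]. split.
  - eapply Un_cv_ext. 2: exact H1. intro N. rewrite Eq. reflexivity.
  - eapply Un_cv_ext. 2: exact H2. intro N. rewrite Eq. reflexivity.
Qed.

Lemma mmul_subr n A B D : mmul n A (msub B D) = msub (mmul n A B) (mmul n A D).
Proof. unfold msub. rewrite mmul_addr, mmul_oppr. reflexivity. Qed.
Lemma mmul_subl n A B D : mmul n (msub A B) D = msub (mmul n A D) (mmul n B D).
Proof. unfold msub. rewrite mmul_addl, mmul_oppl. reflexivity. Qed.

Theorem mainTheorem3 (m M : nat) (Sm Sinv K Kinv U V p0 : Mat)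
  (HS : is_inv M Sm Sinv) (HK : is_inv M K Kinv)
  (Hsyl : meq M M (madd (mmul M Sm K) (mmul M K Sm)) (mmul m V U)) :
  let Sm' := mopp Sm in
  let K' := mopp Kinv in
  let V' := mmul M Kinv V in
  let U' := mmul M U Kinv in
  let p0' := msub p0 (mmul M U (mmul M Kinv V)) in
  meq M M (madd (mmul M Sm' K') (mmul M K' Sm')) (mmul m V' U') /\
  forall (x y : R) (Sinv' Xi Xi' W W' : Mat),
    is_inv M Sm' Sinv' ->
    is_Xi M Sm Sinv x y Xi -> is_W M K Xi W ->
    is_Xi M Sm' Sinv' x y Xi' -> is_W M K' Xi' W' ->
    meq m m (q_of M U V Xi W) (q_of M U' V' Xi' W') /\
    meq m m (p_of M p0 K U V Xi W) (p_of M p0' K' U' V' Xi' W').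
Proof.
  cbv zeta. destruct HK as [HK1 HK2]. split.
  - rewrite (mmul_oppl M Sm), (mmul_oppl M Kinv), (mmul_oppr M Sm), (mmul_oppr M Kinv), !mopp_opp.
    rewrite mmul_assoc. rewrite <- (mmul_assoc M m V U Kinv). rewrite <- Hsyl.
    rewrite mmul_addl, mmul_addr, !mmul_assoc.
    rewrite (canc_end M K Kinv HK1). rewrite (cancel M M Kinv K _ HK2).
    rewrite madd_comm. reflexivity.
  - intros x y Sinv' Xi Xi' W W' HS' HX HW HX' HW'.
    pose proof (inv_neg M Sm Sinv Sinv' HS HS') as Hneg.
    unfold is_Xi in HX, HX'.
    set (Ar := msub (mopp (mscal (RtoC x) Sm)) (mscal (RtoC y) Sinv)) in *.
    assert (HX'' : is_mexp M (mopp Ar) Xi').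
    { eapply mexp_meq. exact HX'. rewrite Hneg. unfold Ar.
      intros i j _ _. unfold msub, madd, mopp, mscal. ring. }
    assert (HXi : is_inv M Xi Xi').
    { split.
      - apply (mexp_inv M Ar); auto.
      - apply (mexp_inv M (mopp Ar)); auto. rewrite mopp_opp. auto. }
    unfold is_W in HW, HW'.
    rewrite !mmul_oppl, !mmul_oppr, !mopp_opp in HW'.
    destruct HW as [HW1 HW2]. destruct HW' as [HW'1 HW'2].
    split.
    + unfold q_of.
      transitivity (mmul M U (mmul M (mmul M Xi W) V)).
      { rewrite !mmul_assoc. reflexivity. }
      rewrite (alg_q M K Kinv Xi Xi' W W' (conj HK1 HK2) HXi HW2 HW'1).
      rewrite !mmul_assoc. reflexivity.
    + unfold p_of.
      assert (T : forall Z, meq M m (mmul M Kinv (mmul M Xi' (mmul M Kinv (mmul M Xi' (mmul M W' Z)))))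
                               (msub Z (mmul M W' Z))).
      { intro Z.
        transitivity (mmul M (msub (madd W' (mmul M (mmul M Kinv Xi') (mmul M (mmul M Kinv Xi') W'))) W') Z).
        - rewrite !mmul_subl, !mmul_addl, !mmul_assoc. intros i j _ _. unfold msub, madd, mopp. ring.
        - rewrite mmul_subl.
          assert (E : meq M M (madd W' (mmul M (mmul M Kinv Xi') (mmul M (mmul M Kinv Xi') W'))) mId).
          { rewrite <- HW'1. rewrite mmul_addl, (mmul_assoc M M (mmul M Kinv Xi')).
            apply madd_proper; [symmetry; apply mmul_idl | reflexivity]. }
          rewrite E. rewrite mmul_idl. reflexivity. }
      transitivity (msub p0 (mmul M U (mmul M (mmul M Xi (mmul M K (mmul M Xi W))) V))).
      { rewrite !mmul_assoc. reflexivity. }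
      rewrite (alg_p M K Kinv Xi Xi' W W' (conj HK1 HK2) HXi HW2 HW'1).
      rewrite !mmul_assoc. rewrite mmul_oppl, mmul_oppr, mmul_oppr, mmul_oppr.
      rewrite (T (mmul M Kinv V)). rewrite mmul_subr.
      intros i j _ _. unfold msub, madd, mopp. ring.
Qed.
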